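(* Let $p$ be a prime, $e\ge1$, $G$ a finite abelian group of order $p^e$, and $q\neq p$ a prime. Let $S=\bigoplus_\rho S_\rho\subset\mathbf{Q}[G]$, $S_\rho\cong\mathbf{Z}[\omega_{k(\rho)}]$, be the integral closure of $\mathbf{Z}[G]$ in $\mathbf{Q}[G]$, the sum running over the chosen representatives $\rho$ of the equivalence classes of representations, and let $e_\rho\in S$ be the idempotent of the factor $S_\rho$. Let $\psi^\ell$ ($\ell$ a prime) denote the ring endomorphism of $\mathbf{Q}[G]$ with $\psi^\ell(g)=g^\ell$. Then $$\psi^p(e_\rho)=\sum_{\tau:\ \psi\tau=\rho}e_\tau\ \text{ if }\rho\neq1,\qquad \psi^p(e_1)=e_1+\sum_{\tau\neq1,\ \psi\tau=1}e_\tau,\qquad \psi^q(e_\rho)=e_\rho,$$ where the sums run over chosen representatives $\tau$.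
   Context: A representation is a group homomorphism $\rho\colon G\to\mathbf{C}^*$; its level $k(\rho)$ is defined by $|\rho(G)|=p^{k(\rho)}$. Two representations are equivalent if they have the same kernel; $1$ is the trivial representation. For a representation $\tau$ of positive level, $\psi\tau$ is $x\mapsto\tau(x^p)$. A representative is chosen in each equivalence class so that, for chosen representatives $\tau,\rho$, if $\psi\tau$ is equivalent to $\rho$ then $\psi\tau=\rho$. $\omega_k=\exp(2\pi i/p^k)$. $\mathbf{Q}[G]\cong\bigoplus_\rho\mathbf{Q}(\omega_{k(\rho)})$ via the maps induced by the $\rho$, and $S_\rho$ is the preimage of $\mathbf{Z}[\omega_{k(\rho)}]$ in the corresponding factor. *)

(* Defs.v *)
From HB Require Import structures.
From mathcomp Require Import all_boot all_order all_algebra all_fingroup all_field.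
Set Implicit Arguments. Unset Strict Implicit. Unset Printing Implicit Defensive.
Import GRing.Theory Num.Theory.
Local Open Scope ring_scope.

(* C is modelled by algC (all character values are roots of
   unity, hence algebraic). The group G is the whole finGroupType gT. *)

Definition QG (gT : finGroupType) := {ffun gT -> rat}.

Definition is_rep (gT : finGroupType) (rho : gT -> algC) : Prop :=
  (forall x y : gT, rho (x * y)%g = rho x * rho y) /\ (forall x : gT, rho x != 0).

Definition rep_ker (gT : finGroupType) (rho : gT -> algC) : {set gT} :=
  [set x | rho x == 1].
Definition rep_equiv (gT : finGroupType) (rho sigma : gT -> algC) : Prop :=
  rep_ker rho = rep_ker sigma.

Definition rep_image_card (gT : finGroupType) (rho : gT -> algC) : nat :=
  size (undup [seq rho x | x <- enum gT]).
Definition level (p : nat) (gT : finGroupType) (rho : gT -> algC) : nat :=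
  logn p (rep_image_card rho).

Definition psi_rep (p : nat) (gT : finGroupType) (tau : gT -> algC) : gT -> algC :=
  fun x => tau (x ^+ p)%g.

Definition rep_hat (gT : finGroupType) (rho : gT -> algC) (a : QG gT) : algC :=
  \sum_(g : gT) ratr (a g) * rho g.

(* psi^l : Q-linear (ring) endomorphism of Q[G] with g |-> g^l. *)
Definition psiQ (l : nat) (gT : finGroupType) (a : QG gT) : QG gT :=
  [ffun h : gT => \sum_(g : gT | (g ^+ l)%g == h) a g].

(* Main.v *)
Require Import Defs.
From HB Require Import structures.
From mathcomp Require Import all_boot all_order all_algebra all_fingroup all_field all_solvable all_character.
Import GRing.Theory Num.Theory.
Local Open Scope ring_scope.
Lemma rep1 (gT : finGroupType) (r : gT -> algC) : is_rep r -> r 1%g = 1.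
Proof.
case=> rM r0; have := rM 1%g 1%g; rewrite mulg1 => h.
by apply: (mulfI (r0 1%g)); rewrite -h mulr1.
Qed.

Lemma rep_gen (gT : finGroupType) (r : gT -> algC) : abelian [set: gT] -> is_rep r ->
  exists g : gT, forall x, exists a : nat, exists2 k, k \in rep_ker r & x = (k * g ^+ a)%g.
Proof.
move=> hab hr.
have Kgrp : group_set (rep_ker r).
  apply/group_setP; split; first by rewrite inE rep1.
  by move=> x y; rewrite !inE hr.1 => /eqP -> /eqP ->; rewrite mulr1.
pose K := Group Kgrp.
have nK x : x \in 'N(K)%g.
  by apply: (subsetP (sub_abelian_norm hab (subsetT K))); rewrite inE.
pose f := fun c : coset_of K => r (repr c).
have fco x : f (coset K x) = r x.
  rewrite /f; set y := repr _.
  have : y \in (K :* x)%g.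
    by apply/rcoset_kercosetP; rewrite ?nK // /y coset_reprK.
  case/rcosetP => k; rewrite inE => /eqP hk ->.
  by rewrite hr.1 hk mul1r.
have fM u v : f (u * v)%g = f u * f v.
  rewrite -{1}(coset_reprK u) -{1}(coset_reprK v) -morphM ?nK //.
  by rewrite fco hr.1.
have cyc : cyclic [set: coset_of K].
  apply: (@field_mul_group_cyclic _ [set: coset_of K]%G _ f).
    by move=> u v _ _; apply: fM.
  move=> c _; split=> [h | ->].
    rewrite -(coset_reprK c) coset_id //.
    by rewrite inE; apply/eqP; exact: h.
  by rewrite -(morph1 (coset_morphism K)) /= fco rep1.
case/cyclicP: cyc => c0 hc0.
exists (repr c0) => x.
have : coset K x \in <[c0]>%g by rewrite -hc0 inE.
case/cycleP => a ha; exists a.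
have : x \in (K :* (repr c0 ^+ a))%g.
  apply/rcoset_kercosetP; rewrite ?nK // morphX ?nK //= coset_reprK //.
case/rcosetP => k hk ->; exists k => //.
Qed.

Lemma repX (gT : finGroupType) (r : gT -> algC) x n : is_rep r -> r (x ^+ n)%g = r x ^+ n.
Proof.
move=> hr; elim: n => [|n IH]; first by rewrite expg0 expr0 rep1.
by rewrite expgS exprS hr.1 IH.
Qed.

Lemma rep_card (gT : finGroupType) (r : gT -> algC) x : is_rep r -> r x ^+ #|gT| = 1.
Proof.
move=> hr; rewrite -repX // -cardsT expg_cardG ?inE //; exact: rep1.
Qed.

Lemma rep_galois (gT : finGroupType) (r s : gT -> algC) : abelian [set: gT] ->
  is_rep r -> is_rep s -> rep_ker r = rep_ker s ->
  exists u : {rmorphism algC -> algC}, forall x, s x = u (r x).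
Proof.
move=> hab hr hs hk.
have [g hg] := @rep_gen _ _ hab hr.
have kerE x : (r x == 1) = (s x == 1).
  by have := congr1 (fun A : {set gT} => x \in A) hk; rewrite /= !inE.
have hpow t : (r g ^+ t == 1) = (s g ^+ t == 1) by rewrite -!repX // kerE.
have ht : (0 < #|gT|)%N by apply/card_gt0P; exists 1%g.
have [m pm _] := prim_order_exists ht (@rep_card _ _ g hr).
have sm : s g ^+ m = 1 by apply/eqP; rewrite -hpow prim_expr_order.
have [[i lti] /= hi] := prim_rootP pm sm.
have ps : m.-primitive_root (s g).
  have m0 := prim_order_gt0 pm.
  have [m' pm' dm'] := prim_order_exists m0 sm.
  have : (m %| m')%N by rewrite (prim_order_dvd pm) hpow prim_expr_order.
  move=> dm; suff -> : m = m' by [].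
  by apply/eqP; rewrite eqn_dvd dm dm'.
have cop : coprime i m by rewrite -(prim_root_exp_coprime _ pm) -hi.
have [u hu] := Qn_aut_exists cop.
exists u => x; have [a [k hk0 ->]] := hg x.
have k1 : s k = 1 by apply/eqP; rewrite -kerE; move: hk0; rewrite inE.
have k1' : r k = 1 by move: hk0; rewrite inE => /eqP.
rewrite hs.1 hr.1 k1 k1' !mul1r !repX // hu; last first.
  by rewrite exprAC (prim_expr_order pm) expr1n.
by rewrite exprAC -hi.
Qed.

Lemma rep_hat_aut (gT : finGroupType) (r : gT -> algC) (u : {rmorphism algC -> algC}) (a : QG gT) :
  rep_hat (fun x => u (r x)) a = u (rep_hat r a).
Proof.
rewrite /rep_hat rmorph_sum; apply: eq_bigr => g _.
by rewrite rmorphM fmorph_rat.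
Qed.

Lemma level_pos (gT : finGroupType) (r : gT -> algC) p e : abelian [set: gT] ->
  prime p -> #|gT| = (p ^ e)%N -> is_rep r -> ~~ [forall x, r x == 1] ->
  (0 < level p r)%N.
Proof.
move=> hab pp hcard hr hnt.
have [g hg] := @rep_gen _ _ hab hr.
have ht : (0 < #|gT|)%N by apply/card_gt0P; exists 1%g.
have [m pm _] := prim_order_exists ht (@rep_card _ _ g hr).
have m0 := prim_order_gt0 pm.
have rxE x : exists2 a, (a < m)%N & r x = r g ^+ a.
  have [a [k hk ->]] := hg x; exists (a %% m)%N; first by rewrite ltn_mod.
  move: hk; rewrite inE => /eqP hk.
  by rewrite hr.1 hk mul1r repX // (prim_expr_mod pm).
have hsz : rep_image_card r = m.
  rewrite /rep_image_card.
  have -> : m = size [seq r g ^+ a | a <- iota 0 m] by rewrite size_map size_iota.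
  apply: perm_size; apply: uniq_perm; first exact: undup_uniq.
    rewrite map_inj_in_uniq ?iota_uniq // => a b; rewrite !mem_iota /= => ha hb.
    move/eqP; rewrite (eq_prim_root_expr pm) !modn_small //; exact/eqP.
  move=> z; rewrite mem_undup; apply/mapP/mapP => [[x _ ->] | [a ha ->]].
    have [a ha ->] := rxE x; exists a => //; rewrite mem_iota.
    by [].
  by exists (g ^+ a)%g; rewrite ?mem_enum // repX.
have dm : (m %| p ^ e)%N by rewrite -hcard (prim_order_dvd pm) (@rep_card _ _ _ hr).
have m1 : m != 1%N.
  apply: contraNneq hnt => hm; apply/forallP => x.
  have [a _ ->] := rxE x.
  by have := prim_expr_order pm; rewrite hm expr1 => ->; rewrite expr1n.
case/(dvdn_pfactor _ _ pp): dm => t _ hmt.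
rewrite /level hsz hmt pfactorK //; rewrite lt0n; apply: contraNneq m1 => ht0.
by rewrite hmt ht0.
Qed.
Lemma psi_is_rep (gT : finGroupType) (r : gT -> algC) l : is_rep r -> is_rep (psi_rep l r).
Proof.
move=> hr; split=> [x y|x]; rewrite /psi_rep !repX // ?hr.1 ?exprMn //.
by rewrite expf_neq0 // hr.2.
Qed.

Lemma rep_hatD (gT : finGroupType) (r : gT -> algC) (a b : QG gT) :
  rep_hat r (a + b) = rep_hat r a + rep_hat r b.
Proof.
rewrite /rep_hat -big_split /=; apply: eq_bigr => g _.
by rewrite ffunE rmorphD mulrDl.
Qed.

Lemma rep_hat0 (gT : finGroupType) (r : gT -> algC) : rep_hat r (0 : QG gT) = 0.
Proof. by rewrite /rep_hat big1 // => g _; rewrite ffunE rmorph0 mul0r. Qed.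

Lemma rep_hatN (gT : finGroupType) (r : gT -> algC) (a : QG gT) :
  rep_hat r (- a) = - rep_hat r a.
Proof.
rewrite /rep_hat -sumrN; apply: eq_bigr => g _.
by rewrite ffunE rmorphN mulNr.
Qed.

Lemma rep_hat_sum (gT : finGroupType) (r : gT -> algC) (I : finType) (P : pred I) (F : I -> QG gT) :
  rep_hat r (\sum_(j | P j) F j) = \sum_(j | P j) rep_hat r (F j).
Proof.
by apply: (big_morph (rep_hat r)); [apply: rep_hatD | apply: rep_hat0].
Qed.

Lemma rep_hat_psiQ (gT : finGroupType) (r : gT -> algC) l (a : QG gT) :
  rep_hat r (psiQ l a) = rep_hat (psi_rep l r) a.
Proof.
rewrite /rep_hat /psiQ /psi_rep.
rewrite [RHS](partition_big (fun g : gT => (g ^+ l)%g) xpredT) //=.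
apply: eq_bigr => h _; rewrite ffunE rmorph_sum mulr_suml.
by apply: eq_bigr => g /eqP ->.
Qed.
Lemma rep_hat_inj (gT : finGroupType) (d : QG gT) : abelian [set: gT] ->
  (forall r : gT -> algC, is_rep r -> rep_hat r d = 0) -> d = 0.
Proof.
move=> hab hd.
pose G := [set: gT]%G.
have hJ : {in <<G>>%g &, forall x y, (fun x => (ratr (d x) : algC)) (x ^ y)%g = (fun x => ratr (d x)) x}.
  move=> x y _ _ /=; have -> // : (x ^ y)%g = x.
  apply/conjg_fixP; have := (centsP hab) y; rewrite inE => h; apply/commgP; move: (h isT x); rewrite inE => hh; first [exact: hh isT | exact: (esym (hh isT)) | exact: hh | exact: esym hh].
have hout : forall x, x \notin <<G>>%g -> (fun x => (ratr (d x) : algC)) x = 0.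
  by move=> x; rewrite genGid inE.
pose phi : 'CF(G) := @Cfun _ G 0 (finfun _) (intro_class_fun hJ hout).
have phiE x : phi x = ratr (d x) by rewrite cfunE.
have phi0 : phi = 0.
  rewrite [phi]cfun_sum_cfdot big1 // => i _.
  have lin : 'chi[G]_i \is a linear_char by apply/char_abelianP.
  suff -> : '[phi, 'chi_i] = 0 by rewrite scale0r.
  rewrite cfdotE.
  have hr : is_rep (fun x => ('chi[G]_i x)^*).
    split=> [x y|x]; first by rewrite (lin_charM lin) ?inE // rmorphM.
    by rewrite conjC_eq0 (lin_char_neq0 lin) ?inE.
  have := hd _ hr; rewrite /rep_hat => h.
  rewrite (eq_bigl xpredT); last by move=> x; rewrite inE.
  rewrite (eq_bigr (fun x => ratr (d x) * ('chi[G]_i x)^*)) ?h ?mulr0 //.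
  by move=> x _; rewrite phiE.
apply/ffunP => x; have := phiE x; rewrite phi0 cfunE ffunE => /esym/eqP.
by rewrite fmorph_eq0 => /eqP.
Qed.

Lemma sum_delta (n : nat) (P : pred 'I_n) (k : 'I_n) :
  \sum_(j | P j) (if j == k then 1 else 0 : algC) = if P k then 1 else 0.
Proof.
case Pk: (P k).
  rewrite (bigD1 k) //= eqxx big1 ?addr0 // => j /andP[_ /negbTE ->] //.
by rewrite big1 // => j Pj; case: eqP => // hj; rewrite -hj Pj in Pk.
Qed.

Lemma ptw_ker (gT : finGroupType) (s t : gT -> algC) :
  (forall x, s x = t x) -> rep_ker s = rep_ker t.
Proof. by move=> h; apply/setP => x; rewrite !inE h. Qed.

Lemma kerT (gT : finGroupType) (s : gT -> algC) :
  (rep_ker s == [set: gT]) = [forall x, s x == 1].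
Proof.
apply/eqP/forallP => [h x | h].
  by have := congr1 (fun A : {set gT} => x \in A) h; rewrite /= !inE.
by apply/setP => x; rewrite !inE h.
Qed.

Lemma root_coprime (z : algC) a b : (0 < a)%N -> coprime a b ->
  z ^+ a = 1 -> z ^+ b = 1 -> z = 1.
Proof.
move=> a0 cab za zb.
have [m pm dm] := prim_order_exists a0 za.
have db : (m %| b)%N by rewrite (prim_order_dvd pm) zb.
have : (m %| gcdn a b)%N by rewrite dvdn_gcd dm db.
rewrite (eqP cab) dvdn1 => /eqP hm.
by have := prim_expr_order pm; rewrite hm expr1.
Qed.

Theorem mainTheorem8 (p e q : nat) (gT : finGroupType)
  (n : nat) (rep : 'I_n -> gT -> algC) (eid : 'I_n -> QG gT) :
  prime p -> (1 <= e)%N -> abelian [set: gT] -> #|gT| = (p ^ e)%N ->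
  prime q -> q != p ->
  (* rep enumerates the chosen representatives of the equivalence classes *)
  (forall i, is_rep (rep i)) ->
  (forall chi : gT -> algC, is_rep chi -> exists i, rep_equiv chi (rep i)) ->
  (forall i j, rep_equiv (rep i) (rep j) -> i = j) ->
  (* compatibility of the choice with psi *)
  (forall i j, (0 < level p (rep i))%N ->
     rep_equiv (psi_rep p (rep i)) (rep j) ->
     forall x, psi_rep p (rep i) x = rep j x) ->
  (* eid i = e_rho (rho = rep i): the idempotent of the factor S_rho, i.e. the
     element of Q[G] mapped to 1 by rho and to 0 by every other chosen sigma *)
  (forall i j, rep_hat (rep j) (eid i) = (if i == j then 1 else 0)) ->
  forall i,
    (~~ [forall x, rep i x == 1] ->
       psiQ p (eid i) =
       \sum_(j | (0 < level p (rep j))%N && [forall x, psi_rep p (rep j) x == rep i x]) eid j) /\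
    ([forall x, rep i x == 1] ->
       psiQ p (eid i) =
       eid i + \sum_(j | ~~ [forall x, rep j x == 1] &&
                         [forall x, psi_rep p (rep j) x == rep i x]) eid j) /\
    psiQ q (eid i) = eid i.
Proof.
move=> pp e1 hab hcard qp hqp hrep hcov huniq hcompat heid i.
have hsw : forall (s : gT -> algC) j, is_rep s -> rep_ker s = rep_ker (rep j) ->
    exists u : {rmorphism algC -> algC}, forall a, rep_hat s a = u (rep_hat (rep j) a).
  move=> s j hs hj; have [u hu] := @rep_galois _ _ _ hab (hrep j) hs (esym hj).
  exists u => a; rewrite -rep_hat_aut /rep_hat; apply: eq_bigr => g _; by rewrite hu.
have ext : forall A B : QG gT, (forall k, rep_hat (rep k) A = rep_hat (rep k) B) -> A = B.
  move=> A B h; apply/eqP; rewrite -subr_eq0; apply/eqP; apply: rep_hat_inj hab _ => s hs.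
  have [j hj] := hcov s hs; have [u hu] := hsw s j hs hj.
  by rewrite hu rep_hatD rep_hatN h subrr rmorph0.
have heq : forall (s : gT -> algC) m j, is_rep s -> rep_ker s = rep_ker (rep m) ->
    rep_hat s (eid j) = (if j == m then 1 else 0).
  move=> s m j hs hm; have [u hu] := hsw s m hs hm.
  by rewrite hu heid; case: eqP => _; rewrite ?rmorph1 ?rmorph0.
have hpsi k := @psi_is_rep _ _ p (hrep k).
split; [move=> hnt | split; [move=> hti|]].
- apply: ext => k; rewrite rep_hat_psiQ rep_hat_sum.
  rewrite (eq_bigr (fun j => if j == k then 1 else 0)); last by move=> j _; rewrite heid.
  rewrite sum_delta.
  have [m hm] := hcov _ (hpsi k); rewrite (heq _ m i (hpsi k) hm).
  case Pk: (_ && _).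
    move/andP: Pk => [_ /forallP hpt].
    have hk : rep_ker (psi_rep p (rep k)) = rep_ker (rep i) by apply: ptw_ker => x; apply/eqP.
    by rewrite (huniq i m) ?eqxx //; rewrite /rep_equiv -hk hm.
  case: eqP => // him; exfalso; subst m.
  case lk: (0 < level p (rep k))%N.
    have := hcompat k i lk hm; move=> hpt; move: Pk; rewrite lk /=.
    by move/negbT/negP; apply; apply/forallP => x; rewrite hpt.
  have tk : [forall x, rep k x == 1].
    apply: contraFT lk => hnk; exact: (@level_pos _ _ _ e hab pp hcard (hrep k) hnk).
  move/negP: hnt; apply; rewrite -kerT.
  by rewrite -hm kerT; apply/forallP => x; rewrite /psi_rep (forallP tk).
- apply: ext => k; rewrite rep_hat_psiQ rep_hatD rep_hat_sum (heid i k).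
  rewrite (eq_bigr (fun j => if j == k then 1 else 0)); last by move=> j _; rewrite heid.
  rewrite sum_delta.
  have [m hm] := hcov _ (hpsi k); rewrite (heq _ m i (hpsi k) hm).
  have kerI : rep_ker (rep i) = [set: gT] by apply/eqP; rewrite kerT.
  case tk: [forall x, rep k x == 1] => /=.
    have hki : k = i by apply: huniq; rewrite /rep_equiv kerI; apply/eqP; rewrite kerT.
    have hpt : rep_ker (psi_rep p (rep k)) = [set: gT].
      by apply/eqP; rewrite kerT; apply/forallP => x; rewrite /psi_rep (forallP tk).
    have him : i = m by apply: huniq; rewrite /rep_equiv -hm hpt kerI.
    by rewrite hki -him eqxx addr0.
  have nik : (i == k) = false.
    by apply/negbTE; apply: contraFN tk => /eqP <-.
  rewrite nik add0r.
  case ht: [forall x, _].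
    have hk : rep_ker (psi_rep p (rep k)) = rep_ker (rep i).
      by apply: ptw_ker => x; apply/eqP; apply: (forallP ht).
    by rewrite (huniq i m) ?eqxx //; rewrite /rep_equiv -hk hm.
  case: eqP => // him; subst m; move/negbT/negP: ht; case.
  apply/forallP => x; rewrite (eqP (forallP hti x)).
  have := congr1 (fun A : {set gT} => x \in A) (etrans hm kerI).
  by rewrite /= !inE.
- apply: ext => k; rewrite rep_hat_psiQ heid; apply: heq; first exact: psi_is_rep.
  apply/setP => x; rewrite !inE /psi_rep repX //.
  apply/idP/idP => [/eqP h|/eqP ->]; last by rewrite expr1n.
  have hz : rep k x ^+ (p ^ e) = 1 by rewrite -hcard (@rep_card _ _ _ (hrep k)).
  apply/eqP; apply: (@root_coprime _ q (p ^ e) (prime_gt0 qp) _ h hz).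
  by apply: coprimeXr; rewrite prime_coprime // dvdn_prime2 //.
Qed.
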